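(* Let $m\ge3$ be a fixed integer and let $S$ be a monoid such that (i) $S$ satisfies $x^{m-2}\,y_1\cdots y_n\,x\,y_n\cdots y_1\,x\approx x^{m-1}\,y_1\cdots y_n\,x\,y_n\cdots y_1\,x$ for each $n>1$; (ii) the words $xyyx$ and $x^{m-1}$ are isoterms for $S$; (iii) the word $x^{m-2}t_1xt_2x$ is an isoterm for $S$; (iv) if $S$ satisfies an identity $\mathbf u\approx x^{m-2}yxyx$ where $x$ occurs exactly $m$ times in $\mathbf u$, then $\mathbf u=x^{m-2}yxyx$. Then $S$ is non-finitely based.
   Context: All letters denote distinct variables of a countably infinite alphabet; words are elements of the free semigroup on it. A monoid $S$ satisfies an identity $\mathbf u\approx\mathbf v$ if both sides are equal under every evaluation of the variables in $S$. A word $\mathbf w$ is an isoterm for $S$ if $S$ satisfies no identity $\mathbf w\approx\mathbf w'$ with $\mathbf w'\ne\mathbf w$. $S$ is finitely based if all its identities are derivable from a finite subset of them; otherwise non-finitely based. *)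

(* Defs.v *)
From mathcomp Require Import all_boot.
Set Implicit Arguments. Unset Strict Implicit. Unset Printing Implicit Defensive.

Definition word := seq nat.
Definition identity := (word * word)%type.

Record monoid := Monoid {
  carrier :> Type;
  mul : carrier -> carrier -> carrier;
  one : carrier;
  mulA : forall a b c, mul a (mul b c) = mul (mul a b) c;
  mul1m : forall a, mul one a = a;
  mulm1 : forall a, mul a one = a }.

Definition eval (S : monoid) (phi : nat -> S) (w : word) : S :=
  foldr (fun x acc => mul (phi x) acc) (one S) w.

Definition satisfies (S : monoid) (u v : word) : Prop :=
  forall phi : nat -> S, eval phi u = eval phi v.

Definition isoterm (S : monoid) (w : word) : Prop :=
  forall w' : word, satisfies S w w' -> w' = w.

(* Substitution of words for variables (monoid signature: may erase letters). *)
Definition subst (theta : nat -> word) (w : word) : word :=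
  flatten (map theta w).

Inductive derivable (Sigma : seq identity) : word -> word -> Prop :=
  | der_refl u : derivable Sigma u u
  | der_sym u v : derivable Sigma u v -> derivable Sigma v u
  | der_trans u v w : derivable Sigma u v -> derivable Sigma v w ->
      derivable Sigma u w
  | der_step (p q : word) (theta : nat -> word) (a b : word) :
      (p, q) \in Sigma ->
      derivable Sigma (a ++ subst theta p ++ b) (a ++ subst theta q ++ b).

Definition finitely_based (S : monoid) : Prop :=
  exists Sigma : seq identity,
    (forall e, e \in Sigma -> satisfies S e.1 e.2) /\
    (forall u v : word, satisfies S u v -> derivable Sigma u v).

Definition vx : nat := 0.
Definition vy : nat := 1.
Definition vt1 : nat := 1.
Definition vt2 : nat := 2.
Definition ys (n : nat) : word := iota 1 n.

(* Main.v *)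
Require Import Defs.
From mathcomp Require Import all_boot.
From mathcomp Require Import zify.
Set Implicit Arguments. Unset Strict Implicit. Unset Printing Implicit Defensive.

Lemma eval_nil S phi : @eval S phi [::] = Defs.one S. Proof. by []. Qed.
Lemma eval_cons S phi a s : @eval S phi (a :: s) = Defs.mul (phi a) (eval phi s).
Proof. by []. Qed.
Lemma eval_cat S phi s t : @eval S phi (s ++ t) = Defs.mul (eval phi s) (eval phi t).
Proof.
elim: s => [|a s IH]; first by rewrite cat0s eval_nil mul1m.
by rewrite cat_cons !eval_cons IH mulA.
Qed.

Lemma subst_cons g a s : subst g (a :: s) = g a ++ subst g s. Proof. by []. Qed.
Lemma subst_cat g s t : subst g (s ++ t) = subst g s ++ subst g t.
Proof. by rewrite /subst map_cat flatten_cat. Qed.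
Lemma subst_comp g h s : subst h (subst g s) = subst (fun l => subst h (g l)) s.
Proof. elim: s => [|a s IH] //. by rewrite !subst_cons subst_cat IH. Qed.

Lemma eval_subst S phi g s :
  @eval S phi (subst g s) = eval (fun l => eval phi (g l)) s.
Proof. elim: s => [|a s IH] //. by rewrite subst_cons eval_cat IH eval_cons. Qed.

Lemma sat_subst S p q g : satisfies S p q -> satisfies S (subst g p) (subst g q).
Proof. move=> H phi; rewrite !eval_subst; exact: H. Qed.
Lemma sat_ctx S p q a b : satisfies S p q -> satisfies S (a ++ p ++ b) (a ++ q ++ b).
Proof. move=> H phi; by rewrite !eval_cat H. Qed.
Lemma sat_sym S p q : satisfies S p q -> satisfies S q p.
Proof. by move=> H phi; rewrite H. Qed.
Lemma sat_trans S p q r : satisfies S p q -> satisfies S q r -> satisfies S p r.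
Proof. by move=> H1 H2 phi; rewrite H1 H2. Qed.

Lemma count_subst c g s :
  count_mem c (subst g s) = sumn [seq count_mem c (g l) | l <- s].
Proof. elim: s => [|a s IH] //. by rewrite subst_cons count_cat IH. Qed.

Lemma count_subst_eq c d g s : (forall l, count_mem c (g l) = (l == d)) ->
  count_mem c (subst g s) = count_mem d s.
Proof. move=> H; elim: s => [|a s IH] //. by rewrite subst_cons count_cat IH H. Qed.

Lemma sumn_split (f : nat -> nat) c s :
  sumn [seq f l | l <- s] = count_mem c s * f c + sumn [seq f l | l <- filter (predC1 c) s].
Proof.
elim: s => [|a s IH] //=; rewrite IH.
by case: (eqVneq a c) => [->|ne] /=; nia.
Qed.

Lemma sumn0 (f : nat -> nat) s : sumn [seq f l | l <- s] = 0 -> forall l, l \in s -> f l = 0.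
Proof.
elim: s => [|a s IH] //= H l; rewrite inE => /orP [/eqP ->|]; first lia.
apply: IH; lia.
Qed.

Lemma sumn_has (f : nat -> nat) s : 0 < sumn [seq f l | l <- s] -> exists2 l, l \in s & 0 < f l.
Proof.
elim: s => [|a s IH] //= H.
case: (posnP (f a)) => Ha; last by exists a; rewrite ?inE ?eqxx.
have [l ls fl] : exists2 l, l \in s & 0 < f l by apply: IH; lia.
by exists l; rewrite // inE ls orbT.
Qed.

Lemma count_fC1 (c d : nat) (s : seq nat) : count_mem d (filter (predC1 c) s) = if d == c then 0 else count_mem d s.
Proof.
rewrite count_filter; case: (eqVneq d c) => [->|nd].
  rewrite (@eq_count _ _ pred0) ?count_pred0 // => x /=.
  by case: (x == c).
apply: eq_count => x /=; case: (eqVneq x d) => [->|] //=; by rewrite nd.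
Qed.

Lemma single_in g c s : (forall l, l \in s -> l != c -> g l = [::]) ->
  subst g s = flatten (nseq (count_mem c s) (g c)).
Proof.
elim: s => [|a s IH] //= H.
rewrite subst_cons IH; last by move=> l ls; apply: H; rewrite inE ls orbT.
case: (eqVneq a c) => [->|ne] //=.
by rewrite H // inE eqxx.
Qed.

Lemma subst_one g c s : uniq s -> c \in s -> (forall l, l \in s -> l != c -> g l = [::]) ->
  subst g s = g c.
Proof. move=> u cs H; by rewrite (single_in H) count_uniq_mem // cs /= cats0. Qed.

Lemma subst_nil_in g s : (forall l, l \in s -> g l = [::]) -> subst g s = [::].
Proof. elim: s => [|a s IH] //= H. by rewrite subst_cons H ?inE ?eqxx // IH // => l ls; apply: H; rewrite inE ls orbT. Qed.

Lemma subst_filter g (P : pred nat) s : (forall l, l \in s -> ~~ P l -> g l = [::]) ->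
  subst g s = subst g (filter P s).
Proof.
elim: s => [|a s IH] //= H.
have IH' : subst g s = subst g (filter P s) by apply: IH => l ls; apply: H; rewrite inE ls orbT.
case: ifP => Pa; rewrite !subst_cons IH' //.
by rewrite H ?inE ?eqxx ?Pa.
Qed.

Lemma subst_nseq g k c : subst g (nseq k c) = flatten (nseq k (g c)).
Proof. by elim: k => //= k IH; rewrite subst_cons IH. Qed.

Lemma flatten_nseq1 (c : nat) k : flatten (nseq k [:: c]) = nseq k c.
Proof. by elim: k => //= k ->. Qed.

Definition un m n : word := nseq (m - 2) vx ++ ys n ++ [:: vx] ++ rev (ys n) ++ [:: vx].
Definition Tmap (i l : nat) : word := if l == 0 then [:: 0] else if l == i then [:: 1] else [::].
Definition Rmap (i j l : nat) : word := if l == i then [:: 0] else if l == j then [:: 1] else [::].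

Definition all01 (s : seq nat) := all (fun l => l <= 1) s.

Lemma size01 s : all01 s -> size s = count_mem 0 s + count_mem 1 s.
Proof. elim: s => [|a s IH] //= /andP [a1 /IH ->]; case: a a1 => [|[|a]] //=; lia. Qed.

Lemma all01_T i s : all01 (subst (Tmap i) s).
Proof.
elim: s => [|a s IH] //; rewrite subst_cons /all01 all_cat; move: IH; rewrite /all01 => -> ; rewrite andbT /Tmap.
by case: ifP => //; case: ifP.
Qed.

Lemma w01_nil s : all01 s -> count_mem 0 s = 0 -> count_mem 1 s = 0 -> s = [::].
Proof. move=> /size01 H h0 h1; apply/eqP; rewrite -size_eq0 H h0 h1. by []. Qed.

Lemma w01_0 s : all01 s -> count_mem 0 s = 1 -> count_mem 1 s = 0 -> s = [:: 0].
Proof.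
move=> a /[dup] h0 + /[dup] h1; move: (size01 a); rewrite h0 h1.
case: s a h0 h1 => [|x [|y s]] //= /andP [x1 _]; case: x x1 => [|[|x]] //.
Qed.

Lemma w01_1 s : all01 s -> count_mem 0 s = 0 -> count_mem 1 s = 1 -> s = [:: 1].
Proof.
move=> a h0 h1; move: (size01 a); rewrite h0 h1.
case: s a h0 h1 => [|x [|y s]] //= /andP [x1 _]; case: x x1 => [|[|x]] //.
Qed.

Lemma w01_11 s : all01 s -> count_mem 0 s = 0 -> count_mem 1 s = 2 -> s = [:: 1; 1].
Proof.
move=> a h0 h1; move: (size01 a); rewrite h0 h1.
case: s a h0 h1 => [|x [|y [|z s]]] //= /and3P [x1 y1 _].
case: x x1 => [|[|x]] //; case: y y1 => [|[|y]] //.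
Qed.

Lemma countT0 i s : count_mem 0 (subst (Tmap i) s) = count_mem 0 s.
Proof. apply: count_subst_eq => l; rewrite /Tmap; case: ifP => //; case: ifP => //. Qed.

Lemma countT1 i s : 0 < i -> count_mem 1 (subst (Tmap i) s) = count_mem i s.
Proof.
move=> i0; apply: count_subst_eq => l; rewrite /Tmap.
case: (eqVneq l 0) => [->|l0] /=; first by case: i i0.
by case: ifP.
Qed.

Lemma prefix0 (s t r : seq nat) : s ++ t = 0 :: r -> count_mem 0 s = 0 -> s = [::].
Proof. by case: s => [|a s] //= [-> _]. Qed.

Lemma noo11 k (s t : seq nat) : nseq k 0 ++ [:: 1; 0; 1; 0] = s ++ [:: 1; 1] ++ t -> False.
Proof.
elim: k s => [|k IH] s /=.
  case: s => [|a [|b [|c [|d s]]]] //= /(congr1 size) /=; rewrite size_cat /=; lia.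
case: s => [|a s] //= [_]; exact: IH.
Qed.

Lemma T_un m n i : 0 < i <= n ->
  subst (Tmap i) (un m n) = nseq (m - 2) 0 ++ [:: 1; 0; 1; 0].
Proof.
move=> /andP [i0 iN].
have hin : i \in ys n by rewrite mem_iota; lia.
have Hy : forall l, l \in ys n -> l != i -> Tmap i l = [::].
  move=> l; rewrite mem_iota /Tmap => hl /negbTE ->; case: (eqVneq l 0) => //; lia.
have Ti : Tmap i i = [:: 1] by rewrite /Tmap; case: (eqVneq i 0) => [|_]; [lia | rewrite eqxx].
rewrite /un !subst_cat subst_nseq (subst_one (c := i)) ?iota_uniq //.
rewrite (subst_one (c := i) (s := rev (ys n))); first last.
- by move=> l; rewrite mem_rev; exact: Hy.
- by rewrite mem_rev.
- by rewrite rev_uniq iota_uniq.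
by rewrite Ti /= flatten_nseq1.
Qed.

Lemma ys_split n j : 0 < j <= n -> ys n = iota 1 (j - 1) ++ iota j (n - j + 1).
Proof.
move=> hj; have -> : iota j (n - j + 1) = iota (1 + (j - 1)) (n - j + 1) by congr iota; lia.
by rewrite -iotaD /ys; congr iota; lia.
Qed.

Lemma R_un m n i j : 0 < i -> i < j <= n ->
  subst (Rmap i j) (un m n) = [:: 0; 1; 1; 0].
Proof.
move=> i0 /andP [ij jn].
have R0 : forall k, subst (Rmap i j) (nseq k 0) = [::].
  move=> k; rewrite subst_nseq /Rmap; case: (eqVneq 0 i) => [|_]; first lia.
  case: (eqVneq 0 j) => [|_]; first lia. by elim: k.
have HA : subst (Rmap i j) (iota 1 (j - 1)) = [:: 0].
  rewrite (subst_one (c := i)) ?iota_uniq ?mem_iota /Rmap ?eqxx //; first lia.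
  move=> l; rewrite mem_iota => hl /negbTE -> ; case: (eqVneq l j) => //; lia.
have HB : subst (Rmap i j) (iota j (n - j + 1)) = [:: 1].
  rewrite (subst_one (c := j)) ?iota_uniq ?mem_iota /Rmap ?eqxx //.
  - by case: (eqVneq j i) => //; lia.
  - lia.
  move=> l; rewrite mem_iota => hl /negbTE -> ; case: (eqVneq l i) => //; lia.
have HA' : subst (Rmap i j) (rev (iota 1 (j - 1))) = [:: 0].
  rewrite (subst_one (c := i)) ?rev_uniq ?iota_uniq ?mem_rev ?mem_iota /Rmap ?eqxx //; first lia.
  move=> l; rewrite mem_rev mem_iota => hl /negbTE -> ; case: (eqVneq l j) => //; lia.
have HB' : subst (Rmap i j) (rev (iota j (n - j + 1))) = [:: 1].
  rewrite (subst_one (c := j)) ?rev_uniq ?iota_uniq ?mem_rev ?mem_iota /Rmap ?eqxx //.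
  - by case: (eqVneq j i) => //; lia.
  - lia.
  move=> l; rewrite mem_rev mem_iota => hl /negbTE -> ; case: (eqVneq l i) => //; lia.
have Rx : Rmap i j vx = [::] by move: (R0 1); rewrite /subst /= cats0.
have E : ys n = iota 1 (j - 1) ++ iota j (n - j + 1).
  by apply: ys_split; apply/andP; split; lia.
rewrite /un E.
rewrite rev_cat !subst_cat R0 HA HB HA' HB' /subst /= Rx.
by [].
Qed.

Lemma count0_ys n : count_mem 0 (ys n) = 0.
Proof. by rewrite count_uniq_mem ?iota_uniq // mem_iota. Qed.

Lemma shapeM (u : nat) k (p : seq nat) h :
  (forall l, l \in p -> h l = if l == u then [:: 0] else [:: 1]) ->
  subst h p = nseq k 0 ++ [:: 1; 0; 1; 0] ->
  exists c1 c2, [/\ p = nseq k u ++ [:: c1; u; c2; u], c1 != u & c2 != u].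
Proof.
move=> H.
have -> : subst h p = map (fun l => if l == u then 0 else 1) p.
  elim: p H => [|a p IH] H //.
  have IH' : subst h p = [seq (if l == u then 0 else 1) | l <- p].
    by apply: IH => l lp; apply: H; rewrite inE lp orbT.
  rewrite subst_cons H ?inE ?eqxx // IH' /=.
  by case: (a == u).
elim: k p {H} => [|k IH] p /=.
  case: p => [|a [|b [|c [|d [|e p]]]]] //=.
  case: (eqVneq a u) => // au; case: (eqVneq b u) => // ->; case: (eqVneq c u) => // cu;
    case: (eqVneq d u) => // -> _.
  by exists a, c.
case: p => [|a p] //=; case: (eqVneq a u) => // -> [] /IH [c1 [c2 [-> h1 h2]]].
by exists c1, c2.
Qed.

Lemma count_iso m S p q (r : nat) : 1 <= m -> isoterm S (nseq (m - 1) vx) ->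
  satisfies S p q -> count_mem r p <= m - 1 -> count_mem r q = count_mem r p.
Proof.
move=> m1 iso H hp.
pose d := fun l : nat => if l == r then [:: 0] else [::].
have Hd : forall s, subst d s = nseq (count_mem r s) 0.
  move=> s; rewrite (single_in (c := r)) /d ?eqxx ?flatten_nseq1 //.
  by move=> l _ /negbTE ->.
have := sat_ctx (nseq (m - 1 - count_mem r p) 0) [::] (sat_subst d H).
rewrite !Hd !cats0 -nseqD.
have -> : m - 1 - count_mem r p + count_mem r p = m - 1 by lia.
move=> /iso /(congr1 size); rewrite !size_cat !size_nseq /=.
move: hp; set a := count_mem r p; set b := count_mem r q. lia.
Qed.

Lemma sumn_count_eq (f : nat -> nat) N : forall (p q : seq nat), size p <= N ->
  (forall l, 0 < f l -> count_mem l q = count_mem l p) ->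
  sumn [seq f l | l <- q] = sumn [seq f l | l <- p].
Proof.
elim: N => [|N IH] p q.
  case: p => //= _ H.
  have Z : forall l, l \in q -> f l = 0.
    move=> l lq; case: (posnP (f l)) => // /H; rewrite /=.
    by move/count_memPn; rewrite lq.
  clear H; by elim: q Z => //= a q IHq Z; rewrite Z ?inE ?eqxx // IHq // => l lq; apply: Z; rewrite inE lq orbT.
case: p => [|c p] sp H.
  apply: (IH [::]) => //.
rewrite (sumn_split _ c q) (sumn_split _ c (c :: p)).
have E1 : count_mem c q * f c = count_mem c (c :: p) * f c.
  by case: (posnP (f c)) => [->|/H ->]; rewrite ?muln0.
rewrite E1; congr addn; apply: IH.
  rewrite size_filter /= eqxx /=; have := count_size (predC1 c) p; move: sp => /=; lia.
by move=> l /H; rewrite !count_fC1 => ->.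
Qed.

Lemma cnt_pos (c : nat) (s : seq nat) : c \in s -> 0 < count_mem c s.
Proof. move=> cs; rewrite lt0n; apply/eqP => /count_memPn; by rewrite cs. Qed.

Lemma cnt0_neq (c l : nat) (s : seq nat) : count_mem c s = 0 -> l \in s -> l != c.
Proof. move=> /count_memPn H ls; apply/eqP => E; by rewrite -E ls in H. Qed.

Lemma count_filterP (P : pred nat) (c : nat) (s : seq nat) : P c ->
  count_mem c (filter P s) = count_mem c s.
Proof.
move=> Pc; elim: s => [|a s IH] //=; case: ifP => Pa /=; rewrite IH //.
by case: (eqVneq a c) => // E; rewrite -E Pa in Pc.
Qed.

Lemma core m n (S : monoid) (p q : word) (th : nat -> word) (a b w : word) (u : nat) :
  3 <= m -> size p < n ->
  isoterm S (nseq (m - 2) vx ++ [:: vt1; vx; vt2; vx]) ->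
  (forall i, 0 < i <= n -> subst (Tmap i) w = nseq (m - 2) 0 ++ [:: 1; 0; 1; 0]) ->
  (forall i j, 0 < i -> i < j <= n -> subst (Rmap i j) w = [:: 0; 1; 1; 0]) ->
  count_mem 0 w = m ->
  w = a ++ subst th p ++ b ->
  satisfies S p q ->
  m <= count_mem u p -> 0 < count_mem 0 (th u) ->
  count_mem u q = count_mem u p.
Proof.
move=> m3 sp iso3 HT HR c0w ew Hpq mu th0.
pose g0 := fun l => count_mem 0 (th l).
have Hc0 : count_mem 0 w = count_mem 0 a + sumn [seq g0 l | l <- p] + count_mem 0 b.
  by rewrite ew !count_cat count_subst addnA.
have Hs0 := sumn_split g0 u p.
have cu1 : count_mem u p <= count_mem u p * g0 u by rewrite leq_pmulr.
move: Hc0 Hs0 cu1; rewrite c0w.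
set CU := count_mem u p; set G := g0 u; set SP := sumn [seq g0 l | l <- p];
  set R := sumn [seq g0 l | l <- filter (predC1 u) p]; set CA := count_mem 0 a;
  set CB := count_mem 0 b => Hc0 Hs0 cu1.
have CG : CU * G = m by lia.
have cu : CU = m by lia.
have g0u : G = 1.
  move: CG; rewrite cu; clearbody G; clear -m3; case: G => [|[|G]] //; nia.
have [ca cb R0] : [/\ CA = 0, CB = 0 & R = 0] by split; lia.
have g0p : forall l, l \in p -> l != u -> count_mem 0 (th l) = 0.
  move=> l lp lu; apply: (sumn0 R0); by rewrite mem_filter /= lu lp.
have Fi : forall i, 0 < i <= n ->
  [/\ count_mem i a = 0, count_mem i b = 0,
      sumn [seq count_mem i (th l) | l <- p] = 2,
      count_mem i (th u) = 0 &
      subst (fun l => subst (Tmap i) (th l)) p = nseq (m - 2) 0 ++ [:: 1; 0; 1; 0]].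
  move=> i hi; have i0 : 0 < i by case/andP: hi.
  have := HT i hi; rewrite ew !subst_cat subst_comp => E.
  have E' := E; rewrite (_ : m - 2 = (m - 3).+1) in E'; last by lia.
  have Ta : subst (Tmap i) a = [::].
    by apply: (prefix0 E'); rewrite countT0.
  rewrite Ta cat0s in E.
  have Er := congr1 rev E; rewrite !rev_cat /= in Er.
  have Tb : subst (Tmap i) b = [::].
    have : rev (subst (Tmap i) b) = [::].
      apply: (prefix0 (t := rev (subst (fun l : nat => subst (Tmap i) (th l)) p))
                (r := [:: 1; 0; 1] ++ rev (nseq (m - 2) 0))).
        exact: Er.
      by rewrite count_rev countT0.
    by move=> /(congr1 rev); rewrite revK.
  rewrite Tb cats0 in E.
  have s2 : sumn [seq count_mem i (th l) | l <- p] = 2.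
    rewrite -count_subst -(countT1 _ i0) subst_comp E count_cat count_nseq /=; lia.
  split => //.
  - by rewrite -(countT1 _ i0) Ta.
  - by rewrite -(countT1 _ i0) Tb.
  - move: (sumn_split (fun l => count_mem i (th l)) u p); rewrite s2 -/CU cu /=.
    set X := count_mem i (th u); set Y := sumn _ => H; nia.
pose fc := fun i => nth 0 p (find (fun v => 0 < count_mem i (th v)) p).
have hasi : forall i, 0 < i <= n -> has (fun v => 0 < count_mem i (th v)) p.
  move=> i /Fi [_ _ s2 _ _]; apply/hasP.
  have [l lp hl] : exists2 l, l \in p & 0 < count_mem i (th l).
    apply: (@sumn_has (fun l => count_mem i (th l)) p).
    by rewrite s2.
  by exists l.
have fcP : forall i, 0 < i <= n -> fc i \in p /\ 0 < count_mem i (th (fc i)).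
  move=> i hi; split; first by apply: mem_nth; rewrite -has_find; exact: hasi.
  exact: (nth_find 0 (hasi i hi)).
have nu : ~~ uniq (map fc (iota 1 n)).
  apply/negP => U.
  have : size (map fc (iota 1 n)) <= size p.
    apply: uniq_leq_size U _ => x /mapP [i hi ->]; rewrite mem_iota in hi.
    by apply: (fcP i _).1; apply/andP; split; lia.
  rewrite size_map size_iota; lia.
have [i0 [j0 [ij jsz e]]] := uniqPn 0 nu.
rewrite size_map size_iota in jsz.
rewrite !(nth_map 0) ?size_iota in e; try lia.
rewrite !nth_iota in e; try lia.
have hi : 0 < 1 + i0 <= n by apply/andP; split; lia.
have hj : 0 < 1 + j0 <= n by apply/andP; split; lia.
have [vp hvi] := fcP _ hi.
have [_ hvj] := fcP _ hj.
rewrite -e in hvj.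
move: (fc (1 + i0)) vp hvi hvj => v vp hvi hvj.
have hi0 := hi; have hj0 := hj.
move: hi hj; set i := 1 + i0; set j := 1 + j0 => hi hj.
have ij' : i < j by rewrite /i /j; lia.
have [ia ib si ui Ei] := Fi i hi.
have [ja jb sj uj Ej] := Fi j hj.
have vu : v != u by apply/eqP => E; rewrite E ui in hvi.
have cvp := cnt_pos vp.
have Hsi := sumn_split (fun l => count_mem i (th l)) v p.
have Hsj := sumn_split (fun l => count_mem j (th l)) v p.
rewrite si /= in Hsi; rewrite sj /= in Hsj.
move: Hsi Hsj cvp hvi hvj.
set CV := count_mem v p; set GI := count_mem i (th v); set GJ := count_mem j (th v).
set RI := sumn _; set RJ := sumn _ => Hsi Hsj cvp hvi hvj.
have i0' : 0 < i by case/andP: hi.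
have : CV = 1 \/ CV = 2 by nia.
case=> CVe; last first.
  have RI0 : RI = 0 by nia.
  have RJ0 : RJ = 0 by nia.
  have oth : forall l, l \in p -> l != v -> count_mem i (th l) = 0 /\ count_mem j (th l) = 0.
    move=> l lp lv; split; [apply: (sumn0 RI0) | apply: (sumn0 RJ0)];
      by rewrite mem_filter /= lv lp.
  have Rnil : forall s, count_mem i s = 0 -> count_mem j s = 0 -> subst (Rmap i j) s = [::].
    move=> s si0 sj0; apply: subst_nil_in => l ls.
    by rewrite /Rmap (negbTE (cnt0_neq si0 ls)) (negbTE (cnt0_neq sj0 ls)).
  have hij : i < j <= n by apply/andP; split => //; case/andP: hj.
  have := HR i j i0' hij; rewrite ew !subst_cat (Rnil a) // (Rnil b) // subst_comp.
  rewrite (single_in (c := v)); last first.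
    by move=> l lp lv; have [h1 h2] := oth l lp lv; exact: Rnil.
  rewrite -/CV CVe /= cats0.
  case: (subst (Rmap i j) (th v)) => [|x1 [|x2 [|x3 X]]] /= E;
    try by move: (congr1 size E) => /=; rewrite ?size_cat /=; lia.
  by case: E => h1 h2 h3 h4; rewrite h1 in h3.
have : GI = 2 \/ (GI = 1 /\ RI = 1) by nia.
case=> [GI2 | [GI1 RI1]].
  have hv : subst (Tmap i) (th v) = [:: 1; 1].
    apply: w01_11; [exact: all01_T | rewrite countT0; exact: g0p vp vu | by rewrite countT1].
  have [p1 [p2 ep]] : exists p1 p2, p = p1 ++ v :: p2.
    by case/splitPr: vp => p1 p2; exists p1, p2.
  move: Ei; rewrite ep subst_cat subst_cons hv => /esym E; case: (noo11 E).
have [v' v'f hv'] : exists2 l, l \in filter (predC1 v) p & 0 < count_mem i (th l).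
  apply: (@sumn_has (fun l => count_mem i (th l))); by rewrite -/RI RI1.
rewrite mem_filter /= in v'f; case/andP: v'f => v'v v'p.
have Hs' := sumn_split (fun l => count_mem i (th l)) v' (filter (predC1 v) p).
rewrite count_fC1 (negbTE v'v) -/RI RI1 /= in Hs'.
have cv'p := cnt_pos v'p.
move: Hs' cv'p hv'; set CV' := count_mem v' p; set GI' := count_mem i (th v');
  set RI' := sumn _ => Hs' cv'p hv'.
have [CV'1 GI'1 RI'0] : [/\ CV' = 1, GI' = 1 & RI' = 0] by split; nia.
have oth : forall l, l \in p -> l != v -> l != v' -> count_mem i (th l) = 0.
  move=> l lp lv lv'; apply: (sumn0 RI'0); by rewrite !mem_filter /= lv lv' lp.
have v'u : v' != u by apply/eqP => E; move: GI'1; rewrite /GI' E ui.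
pose h := fun l => subst (Tmap i) (th l).
have hu : h u = [:: 0].
  apply: w01_0; [exact: all01_T | rewrite countT0; exact: g0u | by rewrite countT1].
have hv : h v = [:: 1].
  apply: w01_1; [exact: all01_T | rewrite countT0; exact: g0p vp vu | by rewrite countT1].
have hv'' : h v' = [:: 1].
  apply: w01_1; [exact: all01_T | rewrite countT0; exact: g0p v'p v'u | by rewrite countT1].
pose P := fun l : nat => l \in [:: u; v; v'].
have ho : forall l, l \in p -> ~~ P l -> h l = [::].
  move=> l lp; rewrite /P !inE => /norP [lu /norP [lv lv']].
  apply: w01_nil; [exact: all01_T | rewrite countT0; exact: g0p lp lu | rewrite countT1 //; exact: oth].
have Eh : subst h p = subst h (filter P p) := subst_filter ho.
set p' := filter P p in Eh.
have Ei2 : subst h p' = nseq (m - 2) 0 ++ [:: 1; 0; 1; 0] by rewrite -Eh; exact: Ei.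
have Hshape : forall l, l \in p' -> h l = if l == u then [:: 0] else [:: 1].
  move=> l; rewrite mem_filter /P !inE => /andP [/or3P [] /eqP -> _];
    by rewrite ?eqxx ?(negbTE vu) ?(negbTE v'u).
have [c1 [c2 [ep' c1u c2u]]] := shapeM Hshape Ei2.
have cm : forall c, c \in p' -> c != u -> (c == v) || (c == v').
  move=> c; rewrite mem_filter /P !inE => /andP [/or3P [] /eqP E _] cu0.
  - by rewrite E eqxx in cu0.
  - by rewrite E eqxx.
  - by rewrite E eqxx orbT.
have c1p : c1 \in p' by rewrite ep' mem_cat !inE eqxx !orbT.
have c2p : c2 \in p' by rewrite ep' mem_cat !inE eqxx !orbT.
have cnt1 : forall c, (c == v) || (c == v') -> count_mem c p' = 1.
  move=> c /orP [] /eqP ->; rewrite count_filterP /P ?inE ?eqxx ?orbT //.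
have c12 : c1 != c2.
  apply/eqP => E; have := cnt1 c1 (cm c1 c1p c1u); rewrite ep' E count_cat /= eqxx; lia.
have c21 : c2 != c1 by rewrite eq_sym.
pose tau := fun l => if l == u then [:: 0] else if l == c1 then [:: 1] else if l == c2 then [:: 2] else [::].
have Etp : subst tau p = subst tau p'.
  apply: subst_filter => l lp; rewrite /P !inE => /norP [lu /norP [lv lv']].
  have lc1 : l != c1 by move: (cm c1 c1p c1u) => /orP [] /eqP ->.
  have lc2 : l != c2 by move: (cm c2 c2p c2u) => /orP [] /eqP ->.
  by rewrite /tau (negbTE lu) (negbTE lc1) (negbTE lc2).
have tu : tau u = [:: 0] by rewrite /tau eqxx.
have t1 : tau c1 = [:: 1] by rewrite /tau (negbTE c1u) eqxx.
have t2 : tau c2 = [:: 2] by rewrite /tau (negbTE c2u) (negbTE c21) eqxx.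
have Etp' : subst tau p' = nseq (m - 2) 0 ++ [:: 1; 0; 2; 0].
  by rewrite ep' subst_cat subst_nseq tu flatten_nseq1 !subst_cons t1 t2 tu.
have Hq := sat_subst tau Hpq.
rewrite Etp Etp' in Hq.
have Eq : subst tau q = nseq (m - 2) vx ++ [:: vt1; vx; vt2; vx] := iso3 _ Hq.
have Hc : count_mem 0 (subst tau q) = count_mem u q.
  apply: count_subst_eq => l; case: (eqVneq l u) => [E|ne].
    by rewrite E tu.
  rewrite /tau (negbTE ne); case: ifP => _ //; case: ifP => //.
rewrite -Hc Eq count_cat count_nseq /= cu /vx /vt1 /vt2 /=; lia.
Qed.

Definition J m n (S : monoid) (w : word) := satisfies S (un m n) w /\ count_mem 0 w = m.

Lemma step m n (S : monoid) (p q : word) (th : nat -> word) (a b : word) :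
  3 <= m -> size p < n ->
  isoterm S [:: vx; vy; vy; vx] ->
  isoterm S (nseq (m - 1) vx) ->
  isoterm S (nseq (m - 2) vx ++ [:: vt1; vx; vt2; vx]) ->
  (forall u : word,
     satisfies S u (nseq (m - 2) vx ++ [:: vy; vx; vy; vx]) ->
     count_mem vx u = m ->
     u = nseq (m - 2) vx ++ [:: vy; vx; vy; vx]) ->
  satisfies S p q ->
  J m n S (a ++ subst th p ++ b) -> J m n S (a ++ subst th q ++ b).
Proof.
move=> m3 sp iso2 isom iso3 Hiv Hpq [Hw cw].
set w := a ++ subst th p ++ b in Hw cw.
split; first exact: sat_trans Hw (sat_ctx a b (sat_subst th Hpq)).
have HT : forall i, 0 < i <= n -> subst (Tmap i) w = nseq (m - 2) 0 ++ [:: 1; 0; 1; 0].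
  move=> i hi; apply: Hiv; last by rewrite countT0.
  by apply: sat_sym; rewrite -(T_un m hi); exact: sat_subst.
have HR : forall i j, 0 < i -> i < j <= n -> subst (Rmap i j) w = [:: 0; 1; 1; 0].
  move=> i j i0 ij; apply: iso2; rewrite -(R_un m i0 ij); exact: sat_subst.
move: cw; rewrite /w !count_cat !count_subst => cw.
rewrite -cw; congr (_ + (_ + _)).
apply: (sumn_count_eq (N := size p)) => // l hl.
case: (leqP (count_mem l p) (m - 1)) => hc.
  apply: count_iso isom Hpq hc; lia.
apply: (core (n := n) (a := a) (b := b) (w := w) m3 sp iso3 HT HR) => //.
- by rewrite /w !count_cat !count_subst.
- lia.
Qed.

Lemma der_J m n (S : monoid) (Sig : seq identity) :
  3 <= m ->
  isoterm S [:: vx; vy; vy; vx] ->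
  isoterm S (nseq (m - 1) vx) ->
  isoterm S (nseq (m - 2) vx ++ [:: vt1; vx; vt2; vx]) ->
  (forall u : word,
     satisfies S u (nseq (m - 2) vx ++ [:: vy; vx; vy; vx]) ->
     count_mem vx u = m ->
     u = nseq (m - 2) vx ++ [:: vy; vx; vy; vx]) ->
  (forall e, e \in Sig -> satisfies S e.1 e.2) ->
  (forall e, e \in Sig -> size e.1 < n /\ size e.2 < n) ->
  forall u v, derivable Sig u v -> (J m n S u <-> J m n S v).
Proof.
move=> m3 iso2 isom iso3 Hiv HS Hsz u v D.
elim: D => {u v} [u|u v _ IH|u v w _ IH1 _ IH2|p q th a b Hin].
- by [].
- by split => /IH.
- by split => [/IH1 /IH2|/IH2 /IH1].
have [s1 s2] := Hsz _ Hin.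
have H := HS _ Hin.
split; apply: step => //; exact: sat_sym.
Qed.

Lemma size_sum (Sig : seq identity) e : e \in Sig ->
  size e.1 + size e.2 <= sumn [seq size e.1 + size e.2 | e <- Sig].
Proof.
elim: Sig => [|f Sig IH] //=; rewrite inE => /orP [/eqP ->|/IH]; [exact: leq_addr | move=> h; exact: leq_trans h (leq_addl _ _)].
Qed.

Theorem theorem6p3 (m : nat) (S : monoid) :
  3 <= m ->
  (* (i) *)
  (forall n, 1 < n ->
     satisfies S (nseq (m - 2) vx ++ ys n ++ [:: vx] ++ rev (ys n) ++ [:: vx])
                 (nseq (m - 1) vx ++ ys n ++ [:: vx] ++ rev (ys n) ++ [:: vx])) ->
  (* (ii) *)
  isoterm S [:: vx; vy; vy; vx] ->
  isoterm S (nseq (m - 1) vx) ->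
  (* (iii) *)
  isoterm S (nseq (m - 2) vx ++ [:: vt1; vx; vt2; vx]) ->
  (* (iv) *)
  (forall u : word,
     satisfies S u (nseq (m - 2) vx ++ [:: vy; vx; vy; vx]) ->
     count_mem vx u = m ->
     u = nseq (m - 2) vx ++ [:: vy; vx; vy; vx]) ->
  ~ finitely_based S.
Proof.
move=> m3 Hi iso2 isom iso3 Hiv [Sig [HS Hder]].
set N := (sumn [seq size e.1 + size e.2 | e <- Sig]).+2.
have Hsz : forall e, e \in Sig -> size e.1 < N /\ size e.2 < N.
  move=> e /size_sum; rewrite /N; lia.
have HN : 1 < N by rewrite /N.
have D := Hder _ _ (Hi N HN).
have := der_J m3 iso2 isom iso3 Hiv HS Hsz D.
have Ju : J m N S (un m N) by split => //; rewrite /un !count_cat count_rev count0_ys count_nseq /=; lia.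
case=> /(_ Ju) [_].
rewrite !count_cat count_rev count0_ys count_nseq /=; lia.
Qed.
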